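(* For $i=1,\dots,d$ let $\omega_i\subseteq\mathbb{R}$ be a nonempty open interval and $f_i:\omega_i\to\mathbb{R}$ a univariate function of Legendre type. Let $\Omega'\subseteq\prod_{i=1}^d\omega_i$ be a nonempty open convex set and let $D'_F$ be the decomposable Bregman divergence on $\Omega'\times\Omega'$ generated by $F(x)=\sum_{i=1}^d f_i(x_i)$, i.e. $D'_F(x\|y)=F(x)-F(y)-\langle\nabla F(y),x-y\rangle$ for $x,y\in\Omega'$. Then $D'_F$ is the restriction to $\Omega'\times\Omega'$ of a Bregman divergence (generated by a function of Legendre type) defined on the axis-aligned box $\Omega=\prod_{i=1}^d\omega_i$.
   Context: A function $G:U\to\mathbb{R}$ on a nonempty open convex set $U\subseteq\mathbb{R}^k$ is of Legendre type if (I) it is differentiable, (II) it is strictly convex, and (III) if $\partial U$ is nonempty, then $\|\nabla G(x)\|\to\infty$ as $x\to\partial U$. The Bregman divergence generated by $G$ is $D_G(x\|y)=G(x)-G(y)-\langle\nabla G(y),x-y\rangle$ on $U\times U$. A decomposable Bregman divergence is one generated by $F(x)=\sum_{i=1}^d f_i(x_i)$ with each $f_i$ a univariate function of Legendre type; then $D_F(x\|y)=\sum_i D_{f_i}(x_i\|y_i)$. *)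

(* Defs.v *)
From HB Require Import structures.
From mathcomp Require Import all_boot all_order all_algebra.
From mathcomp Require Import all_classical all_reals all_analysis.
Set Implicit Arguments. Unset Strict Implicit. Unset Printing Implicit Defensive.
Import Order.TTheory GRing.Theory Num.Theory.
Import numFieldNormedType.Exports.
Local Open Scope classical_set_scope.
Local Open Scope ring_scope.

Definition grad {R : realType} {k : nat} (G : 'rV[R]_k -> R) (x : 'rV[R]_k)
  : 'rV[R]_k := \row_i ('d G x (delta_mx 0 i)).

(* G : U -> R of Legendre type (U nonempty open convex); G is given as a
   total function, only its values on U matter. *)
Definition legendre {R : realType} {k : nat} (U : set 'rV[R]_k)
    (G : 'rV[R]_k -> R) : Prop :=
  (U !=set0) /\ open U /\ convex_set U /\
      (forall x, U x -> differentiable G x) /\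
      (forall x y, U x -> U y -> x != y -> forall t : R, 0 < t < 1 ->
         G (t *: x + (1 - t) *: y) < t * G x + (1 - t) * G y) /\
      (forall b, closure U b -> ~ U b ->
         (fun x => `|grad G x|) @ within U (nbhs b) --> +oo).

Definition legendre1 {R : realType} (w : set R) (f : R -> R) : Prop :=
  (w !=set0) /\ open w /\ is_interval w /\
      (forall x, w x -> derivable f x 1) /\
      (forall x y, w x -> w y -> x != y -> forall t : R, 0 < t < 1 ->
         f (t * x + (1 - t) * y) < t * f x + (1 - t) * f y) /\
      (forall b, closure w b -> ~ w b ->
         (fun x => `|derive1 f x|) @ within w (nbhs b) --> +oo).

(* Bregman divergence D_G(x||y) = G x - G y - <grad G y, x - y>,
   with <grad G y, x - y> written as the differential 'd G y (x - y). *)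
Definition bregman {R : realType} {k : nat} (G : 'rV[R]_k -> R)
    (x y : 'rV[R]_k) : R :=
  G x - G y - 'd G y (x - y).

Definition decomp {R : realType} {d : nat} (f : 'I_d -> R -> R)
    (x : 'rV[R]_d) : R := \sum_(i < d) f i (x ord0 i).

Definition box {R : realType} {d : nat} (w : 'I_d -> set R) : set 'rV[R]_d :=
  [set x | forall i, w i (x ord0 i)].

(* Main.v *)
Require Import Defs.
From HB Require Import structures.
From mathcomp Require Import all_boot all_order all_algebra.
From mathcomp Require Import all_classical all_reals all_analysis.
From mathcomp Require Import ring lra.
Import Order.TTheory GRing.Theory Num.Theory.
Import numFieldNormedType.Exports.
Local Open Scope classical_set_scope.
Local Open Scope ring_scope.
Local Open Scope convex_scope.

Section H.
Context {R : realType} {V : normedModType R}.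

Lemma diff_sum_seq (I : Type) (r : seq I) (g : I -> V -> R) x :
  (forall i, differentiable (g i) x) ->
  differentiable (\sum_(i <- r) g i) x /\
  forall v, 'd (\sum_(i <- r) g i) x v = \sum_(i <- r) 'd (g i) x v.
Proof.
move=> dg; elim: r => [|a r [IH1 IH2]].
  rewrite !big_nil; have -> : (0 : V -> R) = cst 0 by [].
  split; first exact: differentiable_cst.
  move=> v.
  by rewrite diff_cst big_nil.
rewrite big_cons; split; first exact: differentiableD.
by move=> v; rewrite diffD // big_cons /= IH2.
Qed.
End H.

Section H2.
Context {R : realType} {d : nat}.

Definition coord (i : 'I_d) := fun x : 'rV[R]_d => x ord0 i.

Lemma diff_coord i x v : 'd (coord i) x v = v ord0 i.
Proof.
have @f : {linear 'rV[R]_d -> R}.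
  by exists (fun N : 'rV[R]_d => N ord0 i); do 2![eexists]; do ?[constructor];
     rewrite ?mxE// => ? *; rewrite ?mxE//; move=> ?; rewrite !mxE.
rewrite (_ : coord i = f) //; rewrite diff_lin //; exact: coord_continuous.
Qed.

Lemma decompE (f : 'I_d -> R -> R) : decomp f = \sum_(i < d) (f i \o coord i).
Proof. by rewrite fct_sumE; apply/funext => x. Qed.


Lemma decomp_diff (f : 'I_d -> R -> R) (x : 'rV[R]_d) :
  (forall i, differentiable (f i) (x ord0 i)) ->
  differentiable (decomp f) x /\
  forall v, 'd (decomp f) x v = \sum_(i < d) v ord0 i * derive1 (f i) (x ord0 i).
Proof.
move=> df.
have dg : forall i, differentiable (f i \o coord i) x.
  by move=> i; apply: differentiable_comp; [exact: differentiable_coord|exact: df].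
have [H1 H2] := @diff_sum_seq R _ 'I_d (index_enum 'I_d) (fun i => f i \o coord i) x dg.
rewrite decompE; split => // v; rewrite H2; apply: eq_bigr => i _.
rewrite diff_comp //; last exact: differentiable_coord.
by rewrite /= diff_coord diff1E.
Qed.

Lemma grad_decomp (f : 'I_d -> R -> R) (x : 'rV[R]_d) j :
  (forall i, differentiable (f i) (x ord0 i)) ->
  grad (decomp f) x ord0 j = derive1 (f j) (x ord0 j).
Proof.
move=> df; have [_ H] := @decomp_diff f x df.
rewrite /grad mxE H (bigD1 j) //= big1 ?addr0.
  by rewrite mxE !eqxx mul1r.
move=> i ij; rewrite mxE eqxx /=.
by rewrite (negbTE ij) mul0r.

Qed.

Lemma sum_lt_one (F G : 'I_d -> R) j :
  (forall i, F i <= G i) -> F j < G j -> \sum_i F i < \sum_i G i.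
Proof.
move=> le lt; rewrite (bigD1 j) //= [X in _ < X](bigD1 j) //=.
by apply: ltr_leD => //; apply: ler_sum.
Qed.

Lemma norm_entry_le (M : 'rV[R]_d) j : `|M ord0 j| <= `|M|.
Proof.
rewrite [X in _ <= X]/Num.norm /= mx_normrE.
by apply: (le_trans _ (le_bigmax _ _ (ord0, j))).
Qed.

End H2.

Theorem lemma4 (R : realType) (d : nat) (w : 'I_d -> set R)
  (f : 'I_d -> R -> R)
  (hw : forall i, w i !=set0 /\ open (w i) /\ is_interval (w i))
  (hf : forall i, legendre1 (w i) (f i))
  (Om' : set 'rV[R]_d)
  (hOm'0 : Om' !=set0) (hOm'open : open Om') (hOm'conv : convex_set Om')
  (hOm'sub : Om' `<=` box w) :
  exists G : 'rV[R]_d -> R,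
    legendre (box w) G /\
    (forall x y, Om' x -> Om' y -> bregman G x y = bregman (decomp f) x y).
Proof.
exists (decomp f); split => //.
have dfx : forall x, box w x -> forall i, differentiable (f i) (x ord0 i).
  move=> x hx i; apply/derivable1_diffP.
  by have [_ [_ [_ [hd _]]]] := hf i; apply: hd; apply: hx.
split.
  pose pick i := projT1 (cid (hw i).1).
  exists (\row_i pick i) => i; rewrite mxE; exact: (projT2 (cid (hw i).1)).
split.
  rewrite openE => x hx; rewrite /interior.
  suff : \forall y \near x, forall i, w i ((y : 'rV[R]_d) ord0 i) by [].
  apply: (@filter_forall _ 'I_d (fun i (y : 'rV[R]_d) => w i (y ord0 i)) (nbhs x) _) => i.
  have : nbhs (x ord0 i) (w i).
    by have := (hw i).2.1; rewrite openE; apply; apply: hx.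
  by move=> H; apply: (@coord_continuous R 1 d ord0 i x _ H).
split.
  move=> x y l; rewrite !inE /box /= => hx hy i.
  have -> : conv l x y = l%:num *: x + (1 - l%:num) *: y by [].
  rewrite !mxE.
  have hi := (hw i).2.2.
  have l0 : 0 <= l%:num by [].
  have l1 : l%:num <= 1 by [].
  have [xy|yx] := leP (x ord0 i) (y ord0 i).
    apply: (hi _ _ (hx i) (hy i)); apply/andP; split; nra.
  apply: (hi _ _ (hy i) (hx i)); apply/andP; split; nra.
split.
  by move=> x hx; have [] := @decomp_diff R d f x (dfx x hx).
split.
  move=> x y hx hy xy t /andP[t0 t1].
  have [j hj] : exists j, x ord0 j != y ord0 j.
    case: (pselect (exists j, x ord0 j != y ord0 j)) => // H.
    exfalso; move/negP: xy; apply; apply/eqP/rowP => i; apply/eqP/negP => hne.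
    by apply: H; exists i; apply/negP.
  rewrite /decomp !mulr_sumr -big_split /=.
  apply: (@sum_lt_one R d _ _ j).
    move=> i; rewrite !mxE.
    have [e|ne] := eqVneq (x ord0 i) (y ord0 i).
      rewrite e.
      have -> : t * y ord0 i + (1 - t) * y ord0 i = y ord0 i by ring.
      have -> : t * f i (y ord0 i) + (1 - t) * f i (y ord0 i) = f i (y ord0 i) by ring.
      by [].
    have [_ [_ [_ [_ [sc _]]]]] := hf i.
    apply/ltW/sc => //.
    by rewrite t0 t1.
  rewrite !mxE.
  have [_ [_ [_ [_ [sc _]]]]] := hf j.
  by apply/sc => //; rewrite t0 t1.
move=> b hb hnb.
have [j hj] : exists j, ~ w j (b ord0 j) by apply/existsNP.
have hcl : closure (w j) (b ord0 j).
  move=> B hB; have := hb _ ((@coord_continuous R 1 d ord0 j b) _ hB).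
  by case=> z [hz1 hz2]; exists (z ord0 j); split => //; exact: hz1 j.
have [_ [_ [_ [_ [_ bd]]]]] := hf j.
have /cvgryPge lim := bd _ hcl hj.
apply/cvgryPge => A.
have := (@coord_continuous R 1 d ord0 j b) _ (lim A).
move=> H; rewrite nearE /within /= nearE.
have H2 : nbhs b (fun M : 'rV[R]_d => w j (M ord0 j) -> A <= `|derive1 (f j) (M ord0 j)|) := H.
apply: filterS H2 => x /= H2 hx.
apply: (le_trans (H2 (hx j))).
rewrite -(@grad_decomp R d f x j (dfx x hx)).
exact: norm_entry_le.
Qed.
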